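(* Let $D$ be an $n\times n$ distance matrix and let $\mathbf X$ be a truth assignment of the variables $\{x_{i,a}: i\in[n],\ a\in\{n+1,n+2\}\}$ satisfying $\phi_2'$. Then $D'(\phi_2',\mathbf X)=D^{(3)}$.
   Context: $[n]=\{1,\dots,n\}$. An $n\times n$ matrix $D$ with non-negative integer entries is a distance matrix if (i) $D_{ii}=0$ for all $i$ and $D_{ij}>0$ for all $i\ne j$; (ii) $D$ is symmetric; (iii) $D_{iw}+D_{wj}\ge D_{ij}$ for all $i,j,w\in[n]$. The associated graph $G_D=(V_D,E_D)$ of $D$ is the simple unweighted graph with $V_D=\{v_1,\dots,v_n\}$ and $\{v_i,v_j\}\in E_D$ if and only if $D_{ij}=1$; $d_{G_D}$ is its shortest-path distance ($\infty$ if no path). For $q\in\mathbb N$, the $q$-skeleton $G^q$ of $D$ is the edge-weighted graph with vertex set $[n]$ having an edge $\{i,j\}$ ($i<j$) if and only if $D_{ij}\le q$, this edge having weight (length) $D_{ij}$; $D^{(q)}$ denotes the $n\times n$ matrix whose $(i,j)$ entry is the weighted shortest-path distance between $i$ and $j$ in $G^q$ ($\infty$ if no path exists). The Boolean formula $\phi_2'$ over variables $x_{i,a}$ ($i\in[n]$, $a\in\{n+1,n+2\}$; meaning ''$v_i$ is adjacent to the new vertex $v_a$'') is the conjunction (written as an equivalent 2-CNF formula) of the following constraints: (1) for all $i,j\in[n]$ with $D_{ij}>2$: $(\neg x_{i,n+1}\vee\neg x_{j,n+1})$ and $(\neg x_{i,n+2}\vee\neg x_{j,n+2})$; (2) for all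 $i,j\in[n]$ with $D_{ij}=2$ and $d_{G_D}(v_i,v_j)>2$: $(x_{i,n+1}\wedge x_{j,n+1})\vee(x_{i,n+2}\wedge x_{j,n+2})$; (3) for all $i,j\in[n]$ with $D_{ij}>3$: $(\neg x_{i,n+1}\vee\neg x_{j,n+2})$ and $(\neg x_{i,n+2}\vee\neg x_{j,n+1})$; (4) for all $i,j\in[n]$ with $D_{ij}=3$ and $D^{(2)}_{ij}>3$: $(x_{i,n+1}\wedge x_{j,n+2})\vee(x_{i,n+2}\wedge x_{j,n+1})$. For a satisfying assignment $\mathbf X$, $G'_{\phi_2',\mathbf X}$ is the simple graph on $\{v_1,\dots,v_{n+2}\}$ whose induced subgraph on $\{v_1,\dots,v_n\}$ is $G_D$, in which $v_{n+1}$ and $v_{n+2}$ are adjacent, and in which $v_a$ ($a\in\{n+1,n+2\}$) is adjacent to $v_i$ ($i\in[n]$) exactly when $x_{i,a}$ is true in $\mathbf X$. $D'(\phi_2',\mathbf X)$ is the $n\times n$ matrix of shortest-path distances in $G'_{\phi_2',\mathbf X}$ between $v_i$ and $v_j$, $i,j\in[n]$ ($\infty$ if no path). *)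

(* Defs.v *)
From Stdlib Require Import ClassicalEpsilon.
From mathcomp Require Import all_boot matrix.
Set Implicit Arguments. Unset Strict Implicit. Unset Printing Implicit Defensive.

(* Distances take values in nat extended with infinity: [None] = infinity. *)
Definition extnat := option nat.

Definition gt_ext (d : extnat) (k : nat) : bool :=
  if d is Some m then k < m else true.

(* [w x y = Some c] : there is an edge {x,y} of weight c; [None] : no edge. *)
Definition wadj (V : eqType) (w : V -> V -> option nat) : rel V :=
  fun x y => w x y != None.

Fixpoint walk_weight (V : eqType) (w : V -> V -> option nat) (x : V) (p : seq V)
  : nat :=
  if p is y :: p' then odflt 0 (w x y) + walk_weight w y p' else 0.

Definition walk_of_weight (V : eqType) (w : V -> V -> option nat) (u v : V)
  (k : nat) : Prop :=
  exists p : seq V, [/\ path (wadj w) u p, last u p = v & walk_weight w u p = k].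

Definition walk_of_weightb (V : eqType) (w : V -> V -> option nat) (u v : V)
  (k : nat) : bool :=
  if excluded_middle_informative (walk_of_weight w u v k) then true else false.

Lemma walk_of_weightb_ex (V : eqType) (w : V -> V -> option nat) (u v : V) :
  (exists k, walk_of_weight w u v k) -> exists k, walk_of_weightb w u v k.
Proof.
case=> k Hk; exists k; rewrite /walk_of_weightb.
by case: excluded_middle_informative.
Qed.

Definition spdist (V : eqType) (w : V -> V -> option nat) (u v : V) : extnat :=
  match excluded_middle_informative (exists k, walk_of_weight w u v k) with
  | left H => Some (ex_minn (walk_of_weightb_ex H))
  | right _ => None
  end.

Definition is_distance_matrix (n : nat) (D : 'M[nat]_n) : Prop :=
  [/\ (forall i, D i i = 0),
      (forall i j, i != j -> 0 < D i j),
      (forall i j, D i j = D j i)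
    & (forall i j w, D i j <= D i w + D w j)].

Definition GD_w (n : nat) (D : 'M[nat]_n) (i j : 'I_n) : option nat :=
  if D i j == 1 then Some 1 else None.

Definition dGD (n : nat) (D : 'M[nat]_n) (i j : 'I_n) : extnat :=
  spdist (GD_w D) i j.

Definition skel_w (n : nat) (D : 'M[nat]_n) (q : nat) (i j : 'I_n) : option nat :=
  if (i != j) && (D i j <= q) then Some (D i j) else None.

Definition Dq (n : nat) (D : 'M[nat]_n) (q : nat) : 'M[extnat]_n :=
  \matrix_(i, j) spdist (skel_w D q) i j.

(* Truth assignment: [X i a] is x_{i,a}; a = false stands for n+1,
   a = true stands for n+2. *)
Definition sat_phi2' (n : nat) (D : 'M[nat]_n) (X : 'I_n -> bool -> bool) : Prop :=
  [/\ (* (1) *)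
      (forall i j, 2 < D i j ->
         (~~ X i false || ~~ X j false) && (~~ X i true || ~~ X j true)),
      (* (2) *)
      (forall i j, D i j = 2 -> gt_ext (dGD D i j) 2 ->
         (X i false && X j false) || (X i true && X j true)),
      (* (3) *)
      (forall i j, 3 < D i j ->
         (~~ X i false || ~~ X j true) && (~~ X i true || ~~ X j false))
    & (* (4) *)
      (forall i j, D i j = 3 -> gt_ext (Dq D 2 i j) 3 ->
         (X i false && X j true) || (X i true && X j false))].

(* Vertex set: [inl i] is v_i (i in [n]); [inr false] is v_{n+1};
   [inr true] is v_{n+2}. *)
Definition Gp_adj (n : nat) (D : 'M[nat]_n) (X : 'I_n -> bool -> bool)
  (x y : 'I_n + bool) : bool :=
  match x, y with
  | inl i, inl j => D i j == 1
  | inr a, inr b => a != b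
  | inl i, inr a => X i a
  | inr a, inl i => X i a
  end.

Definition Gp_w (n : nat) (D : 'M[nat]_n) (X : 'I_n -> bool -> bool)
  (x y : 'I_n + bool) : option nat :=
  if Gp_adj D X x y then Some 1 else None.

Definition Dprime (n : nat) (D : 'M[nat]_n) (X : 'I_n -> bool -> bool) : 'M[extnat]_n :=
  \matrix_(i, j) spdist (Gp_w D X) (inl i) (inl j).

(* Main.v *)
Require Import Defs.
From Stdlib Require Import ClassicalEpsilon.
From mathcomp Require Import all_boot matrix zify.

Section Gen.
Variable V : eqType.
Variable w : V -> V -> option nat.

Lemma wbP u v k : walk_of_weightb w u v k <-> walk_of_weight w u v k.
Proof. by rewrite /walk_of_weightb; case: excluded_middle_informative. Qed.

Lemma spdist_some u v m : spdist w u v = Some m -> walk_of_weight w u v m.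
Proof.
rewrite /spdist; case: excluded_middle_informative => // H [<-].
by case: ex_minnP => m' /wbP.
Qed.

Lemma walk_weight_cat u p q :
  walk_weight w u (p ++ q) = walk_weight w u p + walk_weight w (last u p) q.
Proof. by elim: p u => [|y p IH] u //=; rewrite IH addnA. Qed.

Lemma walk_cat u v x k1 k2 : walk_of_weight w u v k1 -> walk_of_weight w v x k2 ->
  walk_of_weight w u x (k1 + k2).
Proof.
move=> [p [P1 L1 W1]] [q [P2 L2 W2]]; exists (p ++ q); split.
- by rewrite cat_path P1 L1.
- by rewrite last_cat L1.
- by rewrite walk_weight_cat L1 W1 W2.
Qed.

Lemma walk_nil u : walk_of_weight w u u 0.
Proof. by exists [::]. Qed.

Lemma walk_edge u v c : w u v = Some c -> walk_of_weight w u v c.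
Proof. by move=> H; exists [:: v]; rewrite /= /wadj H addn0. Qed.

Lemma walk_le_cat u v x a b c :
  (exists2 k, k <= a & walk_of_weight w u v k) ->
  (exists2 k, k <= b & walk_of_weight w v x k) -> a + b <= c ->
  exists2 k, k <= c & walk_of_weight w u x k.
Proof.
move=> [k1 H1 W1] [k2 H2 W2] H; exists (k1 + k2); last exact: walk_cat W1 W2.
lia.
Qed.
End Gen.

Lemma spdist_eq (V1 V2 : eqType) (w1 : V1 -> V1 -> option nat)
  (w2 : V2 -> V2 -> option nat) u1 v1 u2 v2 :
  (forall k, walk_of_weight w1 u1 v1 k -> exists2 k', k' <= k & walk_of_weight w2 u2 v2 k') ->
  (forall k, walk_of_weight w2 u2 v2 k -> exists2 k', k' <= k & walk_of_weight w1 u1 v1 k') ->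
  spdist w1 u1 v1 = spdist w2 u2 v2.
Proof.
move=> A B; rewrite /spdist.
case: excluded_middle_informative => H1; case: excluded_middle_informative => H2.
- congr Some.
  case: ex_minnP => m1 /wbP P1 M1; case: ex_minnP => m2 /wbP P2 M2.
  have [k1 Hk1 W1] := A _ P1; have [k2 Hk2 W2] := B _ P2.
  have := M2 _ (proj2 (wbP _ _ _ _ _) W1); have := M1 _ (proj2 (wbP _ _ _ _ _) W2).
  lia.
- by exfalso; case: H1 => k /A [k' _ W]; apply: H2; exists k'.
- by exfalso; case: H2 => k /B [k' _ W]; apply: H1; exists k'.
- by [].
Qed.

Section Main.
Variables (n : nat) (D : 'M[nat]_n) (X : 'I_n -> bool -> bool).
Hypothesis HD : is_distance_matrix D.
Hypothesis HS : sat_phi2' D X.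

Local Notation gw := (walk_of_weight (Gp_w D X)).
Local Notation skw := (walk_of_weight (skel_w D 3)).

Lemma D0eq i j : D i j = 0 -> i = j.
Proof. case: HD => _ Hp _ _; case: (eqVneq i j) => // /Hp; lia. Qed.

Lemma skw_le u v c : D u v <= c -> c <= 3 -> exists2 k, k <= c & skw u v k.
Proof.
case: (eqVneq u v) => [->|neq] Hc H3; first by exists 0 => //; apply: walk_nil.
exists (D u v) => //; apply: walk_edge.
by rewrite /skel_w neq /= (leq_trans Hc H3).
Qed.

Lemma wadjGp x y : wadj (Gp_w D X) x y = Gp_adj D X x y.
Proof. by rewrite /wadj /Gp_w; case: Gp_adj. Qed.

Lemma gw_size x p : path (wadj (Gp_w D X)) x p -> walk_weight (Gp_w D X) x p = size p.
Proof.
elim: p x => //= y p IH x /andP [H P]; rewrite IH // /Gp_w.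
by rewrite wadjGp in H; rewrite H.
Qed.

Lemma Lmain p : forall x v, path (wadj (Gp_w D X)) x p -> last x p = inl v ->
  [/\ forall u, x = inl u -> exists2 k, k <= size p & skw u v k,
      forall u a, x = inr a -> X u a -> exists2 k, k <= (size p).+1 & skw u v k
    & forall u a, x = inr a -> X u (~~ a) -> exists2 k, k <= (size p).+2 & skw u v k].
Proof.
case: HS => C1 _ C3 _.
elim: p => [|y p IH] x v /=.
  by move=> _ ->; split => // u [<-]; exists 0 => //; exact: walk_nil.
rewrite wadjGp => /andP [Hxy Hp] Hl.
have [IHa IHb IHc] := IH y v Hp Hl.
split.
- move=> u Ex; subst x; case: y Hxy Hp Hl IHa IHb IHc => [w|a] /= Hxy Hp Hl IHa IHb IHc.
  + apply: (@walk_le_cat _ _ _ _ _ 1 (size p)) => //.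
    * by apply: (skw_le u w 1) => //; rewrite (eqP Hxy).
    * exact: IHa.
  + exact: IHb.
- move=> u a Ex Hua; subst x; case: y Hxy Hp Hl IHa IHb IHc => [w|b] /= Hxy Hp Hl IHa IHb IHc.
  + apply: (@walk_le_cat _ _ _ _ _ 2 (size p)) => //.
    * apply: (skw_le u w 2) => //; rewrite leqNgt; apply/negP => /C1 /andP [].
      by case: a Hua Hxy => -> ->.
    * exact: IHa.
  + have [k Hk W] := IHc u b erefl ltac:(by move: Hua Hxy; clear; case: a; case: b).
    by exists k => //; lia.
- move=> u a Ex Hua; subst x; case: y Hxy Hp Hl IHa IHb IHc => [w|b] /= Hxy Hp Hl IHa IHb IHc.
  + apply: (@walk_le_cat _ _ _ _ _ 3 (size p)) => //.
    * apply: (skw_le u w 3) => //; rewrite leqNgt; apply/negP => /C3 /andP [].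
      by case: a Hua Hxy => -> ->.
    * exact: IHa.
  + have [k Hk W] := IHb u b erefl ltac:(by move: Hua Hxy; clear; case: a; case: b).
    by exists k => //; lia.
Qed.

Lemma conv q (H : forall x y, x != y -> D x y <= q ->
                 exists2 k, k <= D x y & gw (inl x) (inl y) k) p :
  forall u, path (wadj (skel_w D q)) u p ->
  exists2 k, k <= walk_weight (skel_w D q) u p & gw (inl u) (inl (last u p)) k.
Proof.
elim: p => [|y p IH] u /=; first by exists 0 => //; exact: walk_nil.
move=> /andP [Hy Hp]; move: Hy; rewrite /wadj /skel_w.
case: ifP => // /andP [Hne Hle] _ /=.
exact: walk_le_cat (H _ _ Hne Hle) (IH _ Hp) (leqnn _).
Qed.

Lemma GD_conv p : forall u, path (wadj (GD_w D)) u p ->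
  gw (inl u) (inl (last u p)) (walk_weight (GD_w D) u p).
Proof.
elim: p => [|y p IH] u /=; first by exists [::].
move=> /andP [Hy Hp]; move: Hy; rewrite /wadj /GD_w.
case: ifP => // H1 _ /=.
apply: walk_cat (IH _ Hp); apply: walk_edge; by rewrite /Gp_w /= H1.
Qed.

Lemma E2 x y : D x y <= 2 -> exists2 k, k <= D x y & gw (inl x) (inl y) k.
Proof.
case: HS => _ C2 _ _ H.
have : D x y = 0 \/ D x y = 1 \/ D x y = 2 by lia.
case=> [/D0eq ->|[H1|H2]].
- by exists 0 => //; exact: walk_nil.
- by exists 1; rewrite ?H1 //; apply: walk_edge; rewrite /Gp_w /= H1.
- case Hg: (gt_ext (dGD D x y) 2).
  + have: exists a, X x a && X y a.
      by case/orP: (C2 _ _ H2 Hg) => ?; [exists false | exists true].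
    case=> a /andP [Hx Hy]; exists 2; rewrite ?H2 //.
    exists [:: inr a; inl y]; by rewrite /= !wadjGp /= /Gp_w /= Hx Hy.
  + move: Hg; rewrite /gt_ext; case E: (dGD D x y) => [m|] // Hm.
    have [p [P L W]] := spdist_some _ _ _ _ _ E.
    exists m; first by rewrite H2; lia.
    by rewrite -W -L; apply: GD_conv.
Qed.

Lemma E3 x y : x != y -> D x y <= 3 -> exists2 k, k <= D x y & gw (inl x) (inl y) k.
Proof.
case: HS => _ _ _ C4 _ H.
case: (leqP (D x y) 2) => [|H2]; first exact: E2.
have H3 : D x y = 3 by lia.
case Hg: (gt_ext (Dq D 2 x y) 3).
- have: exists a, X x a && X y (~~ a).
    by case/orP: (C4 _ _ H3 Hg) => ?; [exists false | exists true].
  case=> a /andP [Hx Hy]; exists 3; rewrite ?H3 //.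
  exists [:: inr a; inr (~~ a); inl y].
  by rewrite /= !wadjGp /= /Gp_w /= Hx Hy; case: a {Hx Hy}.
- move: Hg; rewrite /gt_ext mxE; case E: (spdist _ _ _) => [m|] // Hm.
  have [p [P L W]] := spdist_some _ _ _ _ _ E.
  have [k Hk Wk] := conv 2 (fun a b _ h => E2 a b h) _ _ P.
  exists k; first by rewrite H3; lia.
  by rewrite -L.
Qed.

End Main.

Theorem mainTheorem16 (n : nat) (D : 'M[nat]_n) (X : 'I_n -> bool -> bool) :
  is_distance_matrix D -> sat_phi2' D X -> Dprime D X = Dq D 3.
Proof.
move=> HD HS; apply/matrixP => i j; rewrite !mxE; apply: spdist_eq.
- move=> k [p [P L W]].
  have [Ha _ _] := Lmain _ _ _ HS _ _ _ P L.
  have [k' Hk' Wk'] := Ha i erefl.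
  by exists k' => //; rewrite -W (gw_size _ _ _ _ _ P).
- move=> k [p [P L W]].
  have [k' Hk' Wk'] := conv _ _ _ 3 (E3 _ _ _ HD HS) _ _ P.
  by exists k'; rewrite -?W // -L.
Qed.
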